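(* Let $X$ and $Y$ be spaces with $X$ compact Hausdorff, let $a\colon X\to Y$ be a map, and let $E$ be a nonempty finite set. Then every affine ensemble $Q\in\langle (Y^X,a)^{\check C\Delta E}\rangle$ is $(X,1)$-almost fissile.
   Context: Spaces and maps are based unless called unbased. $\langle W\rangle$ = free abelian group on a set $W$; augmentation $\epsilon\colon\langle W\rangle\to\mathbb Z$, $\langle w\rangle\mapsto1$; an ensemble is affine if $\epsilon=1$. $Y^X$ = space of based maps $X\to Y$ (compact-open); $(Y^X,a)$ is this space with basepoint $a$. $V\mapsto V|_R$ restriction homomorphisms; $\mathcal F_n(Z)$ = finite subsets of $Z$ containing the basepoint with at most $n+1$ elements; for based $Z$, $\langle Y^Z\rangle^{(s)}=\{V:V|_R=0\ \forall R\in\mathcal F_{s-1}(Z)\}$. For unbased $U$, $(Y^X)^{(U)}$ = unbased maps $U\to Y^X$; $U\wr X=(U\times X)/(U\times\{x_0\})$; $\#^X(w)(u\wr x)=w(u)(x)$ is a bijection $(Y^X)^{(U)}\to Y^{U\wr X}$, and $\langle (Y^X)^{(U)}\rangle^{(s)}_X=\langle\#^X\rangle^{-1}\langle Y^{U\wr X}\rangle^{(s)}$. For a based space $T$, $\langle (Y^X,a)^T\rangle$ (based maps $T\to(Y^X,a)$) is regarded inside $\langle (Y^X)^{(T)}\rangle$. For nonempty finite $E$: simplex $\Delta E$, faces $\Delta F$; a layout is a set $A$ of pairwise disjoint nonempty subsets of $E$. Cone $\check CU=(U\times[0,1])/(U\times\{0\})$ based at the apex; $\check C\Delta F\subseteq\check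 C\Delta E$ and $\check C\Delta[A]=\bigvee_{F\in A}\check C\Delta F$. Combining product $\boxed{\vee}\colon\prod_{F\in A}\langle Z^{\check C\Delta F}\rangle\to\langle Z^{\check C\Delta[A]}\rangle$ multilinear with $\boxed{\vee}_F\langle v_F\rangle=\langle\bar\bigvee_Fv_F\rangle$. $Q\in\langle (Y^X,a)^{\check C\Delta E}\rangle$ is $(X,r)$-almost fissile if, for every layout $A$, $\boxed{\vee}_{F\in A}Q|_{\check C\Delta F}-Q|_{\check C\Delta[A]}\in\langle (Y^X)^{(\check C\Delta[A])}\rangle^{(r+1)}_X$. *)

(* Defs.v *)
From HB Require Import structures.
From mathcomp Require Import all_boot all_order all_algebra generic_quotient.
From mathcomp Require Import finmap all_classical all_reals topology.
Import numFieldTopology.Exports.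

Set Implicit Arguments.
Unset Strict Implicit.
Unset Printing Implicit Defensive.

Import Order.TTheory GRing.Theory Num.Theory.
Local Open Scope classical_set_scope.
Local Open Scope ring_scope.
Local Open Scope quotient_scope.

(* Free abelian groups  <W>  on a set  W : set T, as finitely supported
   Z-valued functions on T with support in W.  [V t] is the coefficient of
   the generator <t>.                                                         *)
Definition fsupp {T : Type} (V : T -> int) : set T := [set t | V t != 0].

Definition free_ab {T : choiceType} (W : set T) : set (T -> int) :=
  [set V | finite_set (fsupp V) /\ fsupp V `<=` W].

Definition augmentation {T : choiceType} (V : T -> int) : int :=
  \sum_(t \in [set: T]) V t.

Definition lin_ext {T U : choiceType} (phi : T -> U) (V : T -> int) : U -> int :=
  fun u => \sum_(t \in phi @^-1` [set u]) V t.

(* A map defined on a subspace S of T with values in Z is encoded as a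
   function T -> Z which takes the fixed junk value z outside S;
   [restr z S f] is the restriction of f to S in this encoding.             *)
Definition restr {T Z : Type} (z : Z) (S : set T) (f : T -> Z) : T -> Z :=
  fun t => if `[< S t >] then f t else z.

Section mapping_spaces.
Variables (X Y : topologicalType) (x0 : X) (y0 : Y).

(* Y^X : based (continuous) maps X -> Y; topologised by the compact-open
   topology {compact-open, X -> Y}. *)
Definition based_maps : set (X -> Y) := [set f | continuous f /\ f x0 = y0].

Definition junk_map : X -> Y := fun _ => y0.

(* (Y^X)^{(S)} for a subspace S of a space T : unbased continuous maps
   S -> Y^X (encoded with junk value [junk_map] outside S). *)
Definition unbased_maps_into {T : topologicalType} (S : set T) : set (T -> X -> Y) :=
  [set g | (forall t, S t -> based_maps (g t))
        /\ {within S, continuous (g : T -> {compact-open, X -> Y})}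
        /\ (forall t, ~ S t -> g t = junk_map)].

Definition based_maps_into {T : topologicalType} (S : set T) (t0 : T) (a : X -> Y) :
    set (T -> X -> Y) :=
  [set g | unbased_maps_into S g /\ g t0 = a].

End mapping_spaces.

Section filtration.
Variables (Z Y : topologicalType) (z0 : Z) (y0 : Y).

Definition Fsets (n : nat) : set (set Z) :=
  [set Rs | finite_set Rs /\ Rs z0 /\ (#|` fset_set Rs|%fset <= n.+1)%N].

(* <Y^Z>^{(s)} = { V in <Y^Z> : V|_Rs = 0 for all Rs in F_{s-1}(Z) };
   V|_Rs is the image of V under the restriction <Y^Z> -> <Y^Rs>. *)
Definition filtration (s : nat) : set ((Z -> Y) -> int) :=
  [set V | free_ab (based_maps z0 y0) V /\
     forall Rs, Fsets s.-1 Rs -> forall g, lin_ext (restr y0 Rs) V g = 0].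
End filtration.

(* The half-smash  U wr X = (U x X)/(U x {x0})  of an (unbased) subspace U
   of a space T with a based space (X, x0), and  #^X.                        *)
Section wreath.
Variables (T X Y : topologicalType) (U : set T) (x0 : X).

Definition wr_pre := (set_type U * X)%type.

Definition wr_rel' (p q : wr_pre) : bool :=
  (p == q) || ((p.2 == x0) && (q.2 == x0)).

Lemma wr_rel_refl : reflexive wr_rel'.
Proof. by move=> ?; rewrite /wr_rel' eqxx. Qed.

Lemma wr_rel_sym : symmetric wr_rel'.
Proof. by move=> p q; rewrite /wr_rel' eq_sym andbC. Qed.

Lemma wr_rel_trans : transitive wr_rel'.
Proof.
move=> q p r; rewrite /wr_rel' => /orP[/eqP -> //|/andP[px qx]].
by case/orP=> [/eqP <-|/andP[_ rx]]; rewrite px ?qx ?rx orbT.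
Qed.

Definition wr_rel := EquivRel wr_rel' wr_rel_refl wr_rel_sym wr_rel_trans.

Definition wreath := {eq_quot wr_rel}.
HB.instance Definition _ := Quotient.on wreath.
HB.instance Definition _ := Topological.copy wreath (quotient_topology wreath).

Definition wr_base (u : set_type U) : wreath := \pi_wreath (u, x0).

Definition hashX (w : T -> X -> Y) : wreath -> Y :=
  fun q => w (\val (repr q).1) (repr q).2.

End wreath.

Section cone.
Variables (R : realType) (E : finType).

Definition simplexE : set (E -> R) :=
  [set t | (forall e, 0 <= t e) /\ \sum_(e : E) t e = 1].

Definition cone_base : set ({ptws E -> R} * R)%type :=
  [set p | simplexE p.1 /\ 0 <= p.2 <= 1].

Local Notation cone_pre := (set_type cone_base).

Definition cone_rel' (p q : cone_pre) : bool :=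
  (p == q) || (((\val p).2 == 0) && ((\val q).2 == 0)).

Lemma cone_rel_refl : reflexive cone_rel'.
Proof. by move=> ?; rewrite /cone_rel' eqxx. Qed.

Lemma cone_rel_sym : symmetric cone_rel'.
Proof. by move=> p q; rewrite /cone_rel' eq_sym andbC. Qed.

Lemma cone_rel_trans : transitive cone_rel'.
Proof.
move=> q p r; rewrite /cone_rel' => /orP[/eqP -> //|/andP[px qx]].
by case/orP=> [/eqP <-|/andP[_ rx]]; rewrite px ?qx ?rx orbT.
Qed.

Definition cone_rel := EquivRel cone_rel' cone_rel_refl cone_rel_sym cone_rel_trans.

Definition cone := {eq_quot cone_rel}.
HB.instance Definition _ := Quotient.on cone.
HB.instance Definition _ := Topological.copy cone (quotient_topology cone).

Definition cface (F : {set E}) : set cone :=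
  [set c | exists p : cone_pre, \pi_cone p = c /\
                                forall e, e \notin F -> (\val p).1 e = 0].

Variable e0 : E. (* witness that E is nonempty *)

Definition vertex : E -> R := fun e => if e == e0 then 1 else 0.

Lemma apex_pre_in : ((vertex : {ptws E -> R}), (0 : R)) \in cone_base.
Proof.
apply/mem_set; split; last by rewrite /= lexx ler01.
split=> [e|] /=.
  by rewrite /vertex; case: (e == e0); rewrite ?ler01 ?lexx.
rewrite /vertex (bigD1 e0) //= eqxx big1 ?addr0 // => e /negbTE -> //.
Qed.

Definition apex : cone := \pi_cone (SigSub apex_pre_in : cone_pre).

Definition layout (A : {set {set E}}) : Prop :=
  (forall F, F \in A -> F != finset.set0) /\
  (forall F G, F \in A -> G \in A -> F != G -> (F :&: G == finset.set0)).

(* CDelta[A] = \/_{F in A} CDelta F, a subspace of CDelta E (containing the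
   apex, which is the whole wedge when A is empty) *)
Definition cwedge (A : {set {set E}}) : set cone :=
  [set c | c = apex \/ exists2 F, F \in A & cface F c].

Lemma apex_in_cwedge (A : {set {set E}}) : apex \in cwedge A.
Proof. by apply/mem_set; left. Qed.

Definition apexA (A : {set {set E}}) : set_type (cwedge A) :=
  SigSub (apex_in_cwedge A).

Variables (X Y : topologicalType) (x0 : X) (y0 : Y) (a : X -> Y).

Local Notation jk := (fun _ : X => y0).

Definition restrict_ens (S : set cone) (Q : (cone -> X -> Y) -> int) :
    (cone -> X -> Y) -> int :=
  lin_ext (restr jk S) Q.

Definition wedge_map (A : {set {set E}}) (w : {set E} -> cone -> X -> Y) :
    cone -> X -> Y :=
  fun c => if c == apex then a else
    match [pick F in A | `[< cface F c >]] with
    | Some F => w F c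
    | None => jk
    end.

(* combining product: the multilinear map with
   [boxed \/]_F <v_F> = <\bar\/_F v_F> *)
Definition combine (A : {set {set E}})
    (V : {set E} -> (cone -> X -> Y) -> int) : (cone -> X -> Y) -> int :=
  fun v => \sum_(w \in [set w : {set E} -> cone -> X -> Y |
                         (forall F, F \notin A -> w F = (fun _ => jk)) /\
                         wedge_map A w = v])
             \prod_(F in A) V F (w F).

Definition almost_fissile (r : nat) (Q : (cone -> X -> Y) -> int) : Prop :=
  forall A : {set {set E}}, layout A ->
    let D := fun v => combine A (fun F => restrict_ens (cface F) Q) v
                      - restrict_ens (cwedge A) Q v in
    free_ab (unbased_maps_into x0 y0 (cwedge A)) D /\
    filtration (wr_base x0 (apexA A)) y0 r.+1 (lin_ext (@hashX _ X Y (cwedge A) x0) D).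

End cone.

(* Main.v *)
Require Import Defs.
From HB Require Import structures.
From mathcomp Require Import all_boot all_order all_algebra generic_quotient.
From mathcomp Require Import finmap all_classical all_reals topology.
Import numFieldTopology.Exports.
Set Implicit Arguments.
Unset Strict Implicit.
Unset Printing Implicit Defensive.
Import Order.TTheory GRing.Theory Num.Theory.
Local Open Scope classical_set_scope.
Local Open Scope ring_scope.
Local Open Scope quotient_scope.

Definition repK {K : finType} {T : eqType} (c : K -> int) (g : K -> T) (t : T) : int :=
  \sum_(k : K) if g k == t then c k else 0.

Lemma fsbig_seqP (T : choiceType) (A : set T) (r : seq T) (f : T -> int) :
  uniq r -> (forall i, A i -> i \notin r -> f i = 0) ->
  \sum_(i \in A) f i = \sum_(i <- r | i \in A) f i.
Proof.
move=> ur H; rewrite (bigfs _ _ (P := fun i => i \in A)) //.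
  by rewrite set_mem_set.
by move=> i; rewrite inE => /H.
Qed.

Lemma repK_supp {K : finType} {T : eqType} (c : K -> int) (g : K -> T) t :
  repK c g t != 0 -> exists k, g k = t.
Proof.
apply: contraNP => /forallNP H; rewrite /repK big1 // => k _.
by case: eqP => // /H.
Qed.

Lemma repK_finite {K : finType} {T : eqType} (c : K -> int) (g : K -> T) :
  finite_set (fsupp (repK c g)).
Proof.
apply: (sub_finite_set (B := range g)); last first.
  by apply: finite_image; exact: finite_finset.
by move=> t /repK_supp [k <-]; exists k.
Qed.

Lemma sum_pick_seq (T : eqType) (r : seq T) (P : pred T) (x : T) (v : int) :
  uniq r -> x \in r ->
  \sum_(t <- r | P t) (if x == t then v else 0) = if P x then v else 0.
Proof.
move=> ur xr; rewrite -big_mkcondr.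
rewrite (eq_bigl (fun t => (t == x) && P x)); last first.
  move=> t; case: (x =P t) => [->|ne]; first by rewrite eqxx andbT.
  by rewrite andbF; case: eqP => // e; case: ne.
case: (P x); last by rewrite big_pred0 // => t; rewrite andbF.
rewrite (eq_bigl (fun t => t == x)); last by move=> t; rewrite andbT.
by rewrite big_mkcond (bigD1_seq x) //= eqxx big1 ?addr0 // => t /negbTE ->.
Qed.

Lemma lin_ext_repK {K : finType} {T U : choiceType} (phi : T -> U)
    (c : K -> int) (g : K -> T) :
  lin_ext phi (repK c g) = repK c (phi \o g).
Proof.
apply: funext => u; rewrite /lin_ext.
set r := undup [seq g k | k <- enum K].
have ur : uniq r by rewrite undup_uniq.
have gr k : g k \in r by rewrite mem_undup; apply: map_f; rewrite mem_enum.
rewrite (fsbig_seqP (r := r)) //; last first.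
  move=> t _ tr; apply/eqP; apply: contraNT tr => H.
  by have [k <-] := repK_supp H; exact: gr.
rewrite /repK exchange_big /=; apply: eq_bigr => k _.
rewrite sum_pick_seq //; congr (if _ then _ else _).
by apply/idP/eqP; rewrite inE.
Qed.

Lemma aug_repK {K : finType} {T : choiceType} (c : K -> int) (g : K -> T) :
  augmentation (repK c g) = \sum_k c k.
Proof.
rewrite /augmentation.
set r := undup [seq g k | k <- enum K].
have ur : uniq r by rewrite undup_uniq.
have gr k : g k \in r by rewrite mem_undup; apply: map_f; rewrite mem_enum.
rewrite (fsbig_seqP (r := r)) //; last first.
  move=> t _ tr; apply/eqP; apply: contraNT tr => H.
  by have [k <-] := repK_supp H; exact: gr.
rewrite /repK exchange_big /=; apply: eq_bigr => k _.
by rewrite sum_pick_seq // in_setT.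
Qed.


Lemma distr_one (I J : finType) (j0 : J) (P : pred I) (c : J -> int) :
  \sum_j c j = 1 ->
  \sum_(f in pfamily j0 P (fun _ _ => true)) \prod_(i | P i) c (f i) = 1.
Proof.
move=> c1; rewrite -(big_distr_big_dep j0 P (fun _ _ => true) (fun _ j => c j)) /=.
by rewrite big1 // => i _; rewrite c1.
Qed.

Lemma distr_h (I J : finType) (j0 : J) (P : pred I) (i0 : I) (c h : J -> int) :
  P i0 -> \sum_j c j = 1 ->
  \sum_(f in pfamily j0 P (fun _ _ => true)) (\prod_(i | P i) c (f i)) * h (f i0) =
  \sum_j c j * h j.
Proof.
move=> Pi0 c1.
pose G i j := if i == i0 then c j * h j else c j.
transitivity (\sum_(f in pfamily j0 P (fun _ _ => true)) \prod_(i | P i) G i (f i)).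
  apply: eq_bigr => f _.
  rewrite (bigD1 i0) //= [RHS](bigD1 i0) //= {1}/G eqxx.
  rewrite [X in _ = _ * X](eq_bigr (fun i => c (f i))); last first.
    by move=> i /andP[_ /negbTE]; rewrite /G => ->.
  by rewrite mulrAC.
rewrite -(big_distr_big_dep j0 P (fun _ _ => true) G) /=.
rewrite (bigD1 i0) //= [X in _ * X]big1 ?mulr1; first by rewrite /G eqxx.
by move=> i /andP[_ /negbTE]; rewrite /G => ->.
Qed.

Lemma repK_sub {K1 K2 : finType} {T : eqType} (c1 : K1 -> int) (g1 : K1 -> T)
    (c2 : K2 -> int) (g2 : K2 -> T) :
  (fun t => repK c1 g1 t - repK c2 g2 t) =
  repK (fun k : K1 + K2 => match k with inl k1 => c1 k1 | inr k2 => - c2 k2 end)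
       (fun k => match k with inl k1 => g1 k1 | inr k2 => g2 k2 end).
Proof.
apply: funext => t; rewrite /repK big_sumType /=; congr (_ + _).
rewrite -sumrN; apply: eq_bigr => k _; case: ifP => //; rewrite oppr0.
Qed.

Lemma two_pts (T : choiceType) (Rs : set T) z : finite_set Rs -> Rs z ->
  (#|` fset_set Rs| <= 2)%N -> exists p, forall q, Rs q -> q = z \/ q = p.
Proof.
move=> Rfin Rz Rc.
case: (pselect (exists p, Rs p /\ p <> z)) => [[p [Rp pz]]|H]; last first.
  exists z => q Rq; left; apply: contrapT => qz; apply: H; exists q; split.
  - exact: Rq.
  - exact: qz.
exists p => q Rq; case: (pselect (q = z)) => [->|qz]; [by left|right].
apply: contrapT => qp.
have : (3 <= #|` fset_set Rs|)%N.
  have -> : 3%N = size [:: z; p; q] by [].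
  apply: uniq_leq_size.
    rewrite /= !inE negb_or; apply/and3P; split.
    - by apply/andP; split; apply/eqP => e; [apply: pz|apply: qz].
    - by apply/eqP => e; apply: qp.
    - done.
  move=> t; rewrite !inE => /or3P[] /eqP ->; rewrite in_fset_set //; exact/mem_set.
by rewrite leqNgt => /negP; apply; rewrite ltnS.
Qed.

Lemma prod_if (I : finType) (P : pred I) (b : I -> bool) (f : I -> int) :
  \prod_(i | P i) (if b i then f i else 0) =
  if [forall i, P i ==> b i] then \prod_(i | P i) f i else 0.
Proof.
case: (boolP [forall i, P i ==> b i]) => [/forallP H|/forallPn [i]].
  by apply: eq_bigr => i Pi; have := H i; rewrite Pi /= => ->.
rewrite negb_imply => /andP[Pi /negbTE bi].
by rewrite (bigD1 i) //= bi mul0r.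
Qed.

Section Combine.
Variables (R : realType) (E : finType) (e0 : E) (X Y : topologicalType).
Variables (y0 : Y) (a : X -> Y).
Local Notation M := (cone R E -> X -> Y).
Local Notation jk := (fun _ : X => y0).
Variables (n : nat) (c : 'I_n -> int) (sq : 'I_n -> M) (j0 : 'I_n).
Variable A : {set {set E}}.

Definition wphi (f : {ffun {set E} -> 'I_n}) : {set E} -> M :=
  fun F => if F \in A then restr jk (cface F) (sq (f F)) else (fun _ => jk).

Definition pfam := pfamily j0 (mem A) (fun _ _ => true).

Lemma combine_repK :
  combine e0 y0 a A (fun F => repK c (fun k => restr jk (cface F) (sq k))) =
  repK (fun f => if f \in pfam then \prod_(F in A) c (f F) else 0)
       (fun f => wedge_map e0 y0 a A (wphi f)).
Proof.
apply: funext => v; rewrite /combine /repK.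
set W := [set w | _ /\ _].
have cond (f : {ffun {set E} -> 'I_n}) w : W w ->
    [forall F, (F \in A) ==> (restr jk (cface F) (sq (f F)) == w F)] = (wphi f == w).
  move=> [Wout _]; apply/forallP/eqP => [H|<- F].
    apply: funext => F; rewrite /wphi; case: ifP => FA.
      by have := H F; rewrite FA => /eqP.
    by rewrite Wout // FA.
  by rewrite /wphi; case: ifP => //= _; rewrite eqxx.
under eq_fsbigr => w Ww.
  rewrite (big_distr_big_dep j0) /=.
  under eq_bigr => f _ do rewrite prod_if.
  over.
set r := undup [seq wphi f | f <- enum {ffun {set E} -> 'I_n}].
have ur : uniq r by rewrite undup_uniq.
have fr f : wphi f \in r by rewrite mem_undup; apply: map_f; rewrite mem_enum.
rewrite (fsbig_seqP (r := r)) //; last first.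
  move=> w Ww wr; apply: big1 => f _; rewrite cond //; case: eqP => // fw.
  by rewrite -fw fr in wr.
rewrite exchange_big /= [RHS](bigID (fun f => f \in pfam)) /= [X in _ = _ + X]big1; last first.
  by move=> f /negbTE ->; rewrite if_same.
rewrite addr0; apply: eq_bigr => f fA; rewrite fA.
transitivity (\sum_(w <- r | w \in W) (if wphi f == w then \prod_(F in A) c (f F) else 0)).
  by apply: eq_bigr => w; rewrite inE => Ww; rewrite cond.
rewrite sum_pick_seq //; congr (if _ then _ else _).
apply/idP/eqP => [/set_mem [_ ->] //|e]; apply/mem_set; split => // F FA.
by rewrite /wphi (negbTE FA).
Qed.

End Combine.

Lemma repr_wr_x0 (T X : topologicalType) (U : set T) (x0 : X) (u0 : set_type U) :
  (repr (wr_base x0 u0)).2 = x0.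
Proof.
rewrite /wr_base.
set q := \pi_(wreath U x0) (u0, x0).
have : \pi_(wreath U x0) (repr q) = \pi_(wreath U x0) (u0, x0) by rewrite reprK.
move/eqmodP; rewrite /= /wr_rel' => /orP[/eqP -> //|/andP[/eqP -> _] //].
Qed.

Lemma hashX_based (T X Y : topologicalType) (U : set T) (x0 : X) (y0 : Y)
  (u0 : set_type U) (g : T -> X -> Y) :
  compact [set: X] -> hausdorff_space X ->
  unbased_maps_into x0 y0 U g -> based_maps (wr_base x0 u0) y0 (hashX g).
Proof.
move=> cX hX [gb [gc _]]; split; last first.
  rewrite /hashX repr_wr_x0; exact: (gb _ (set_valP _)).2.
have lcX : locally_compact [set: X].
  move=> x _; exists [set: X]; last by split => //; exact: closedT.
  by rewrite withinET; exact: filterT.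
pose f (u : set_type U) : {compact-open, X -> Y} := g (set_val u).
have fc : continuous f.
  by have := (subspace_sigL_continuousP _ _).1 gc.
have fuc : continuous (uncurry f).
  apply: continuous_uncurry => // u; exact: (gb _ (set_valP u)).1.
have hom : {homo uncurry f : p q / \pi_(quotient_topology (wreath U x0)) p ==
     \pi_(quotient_topology (wreath U x0)) q :> quotient_topology (wreath U x0) >-> p == q}.
  move=> [u x] [v z] /eqP /eqmodP; rewrite /= /wr_rel' => /orP[/eqP [-> ->] //|].
  move=> /andP[/eqP /= -> /eqP /= ->]; rewrite /f.
  by rewrite (gb _ (set_valP u)).2 (gb _ (set_valP v)).2.
apply/continuousP => B oB.
rewrite /open /= /quotient_open.
have -> : \pi_(quotient_topology (wreath U x0)) @^-1` (hashX g @^-1` B) = uncurry f @^-1` B.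
  apply/seteqP; split => p /=; rewrite /hashX.
    have /eqP := hom _ _ (introT eqP (reprK (\pi_(quotient_topology (wreath U x0)) p))).
    by rewrite /= => e; rewrite -e; case: (repr _).
  have /eqP := hom _ _ (introT eqP (reprK (\pi_(quotient_topology (wreath U x0)) p))).
  by rewrite /= => e; rewrite -e; case: (repr _).
exact: (continuousP _).1 fuc B oB.
Qed.

Section Geo.
Variables (R : realType) (E : finType) (e0 : E).
Local Notation cone_pre := (set_type (@cone_base R E)).
Local Notation cone := (cone R E).
Local Notation apex := (apex R e0).

Lemma cone_sum (p : cone_pre) : \sum_e (\val p).1 e = 1.
Proof. by have [[_ ->] _] := set_valP p. Qed.

Lemma pi_apex (p : cone_pre) : (\val p).2 = 0 -> \pi_cone p = apex.
Proof.
move=> p0; rewrite /apex; apply/eqmodP; rewrite /= /cone_rel' p0 eqxx /=.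
by rewrite orbT.
Qed.

Lemma pi_eq (p q : cone_pre) : \pi_cone p = \pi_cone q ->
  p = q \/ ((\val p).2 = 0 /\ (\val q).2 = 0).
Proof.
move/eqmodP; rewrite /= /cone_rel' => /orP[/eqP -> | /andP[/eqP -> /eqP ->]].
  by left.
by right.
Qed.

Lemma cface_disj (F G : {set E}) (c : cone) : F :&: G = finset.set0 ->
  cface F c -> cface G c -> c = apex.
Proof.
move=> FG [p [<- pF]] [q [qe qG]].
have [pq|[p0 _]] := pi_eq (esym qe); last exact: pi_apex.
subst q; have := cone_sum p; rewrite big1 => [/eqP|e _].
  by rewrite eq_sym oner_eq0.
case: (boolP (e \in F)) => eF; last exact: pF.
apply: qG; apply/negP => eG.
by have := finset.in_setI e F G; rewrite eF eG FG finset.in_set0.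
Qed.


Lemma closed_pre (S : set cone) : closed (\pi_cone @^-1` S : set cone_pre) -> closed S.
Proof.
move=> cS; rewrite -[S]setCK; apply: open_closedC.
rewrite /open /= /quotient_open preimage_setC; exact: closed_openC.
Qed.

Lemma val_cont : continuous (set_val : cone_pre -> ({ptws E -> R} * R)%type).
Proof. exact: initial_continuous. Qed.

Lemma fst_cont (S T : topologicalType) : continuous (@fst S T).
Proof. by move=> x; exact: cvg_fst. Qed.

Lemma snd_cont' (S T : topologicalType) : continuous (@snd S T).
Proof. by move=> x; exact: cvg_snd. Qed.

Lemma coord_cont (e : E) : continuous (fun p : cone_pre => (set_val p).1 e).
Proof.
move=> p.
have h1 := @continuous_comp _ _ _ (@fst {ptws E -> R} R) (fun t : {ptws E -> R} => t e)
   (set_val p) (@fst_cont _ _ _) (@proj_continuous _ _ e _).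
move: (@val_cont p) h1; exact: continuous_comp.
Qed.

Lemma snd_cont : continuous (fun p : cone_pre => (set_val p).2).
Proof.
move=> p; move: (@val_cont p) (@snd_cont' {ptws E -> R} R (set_val p)); exact: continuous_comp.
Qed.

Lemma closed0R : closed [set (0:R)].
Proof. apply: accessible_closed_set1; apply: hausdorff_accessible; exact: Rhausdorff. Qed.


Lemma apex_val : (\val (repr apex)).2 = 0.
Proof.
have := reprK apex; rewrite {2}/apex => /pi_eq [->|[-> _]] //.
Qed.

Lemma pi_apexE (p : cone_pre) : (\pi_cone p = apex) <-> (\val p).2 = 0.
Proof.
split; last exact: pi_apex.
rewrite -{1}(reprK apex) => /pi_eq [->|[-> _]] //; exact: apex_val.
Qed.

Lemma closed_snd0 : closed [set p : cone_pre | (\val p).2 = 0].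
Proof.
have := (continuous_closedP _).1 snd_cont _ closed0R; exact.
Qed.

Lemma closed_apex : closed [set apex].
Proof.
apply: closed_pre.
have -> : \pi_cone @^-1` [set apex] = [set p : cone_pre | (\val p).2 = 0].
  by apply/seteqP; split => p /= /pi_apexE.
exact: closed_snd0.
Qed.

Lemma closed_cface (F : {set E}) : closed (@cface R E F).
Proof.
apply: closed_pre.
pose K := exists q : cone_pre, (\val q).2 = 0 /\ forall e, e \notin F -> (\val q).1 e = 0.
have -> : \pi_cone @^-1` (cface F) =
    (\bigcap_(e in [set e | e \notin F]) ((fun p : cone_pre => (set_val p).1 e) @^-1` [set (0:R)]))
    `|` [set p : cone_pre | K /\ (\val p).2 = 0].
  apply/seteqP; split => p /=.
    move=> [q [qe qF]]; have [pq|[q0 p0]] := pi_eq qe.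
      by subst q; left => e /= eF; rewrite set_valE; exact: qF.
    by right; split => //; exists q.
  case => [Hp|[[q [q0 qF]] p0]].
    by exists p; split => // e eF; have := Hp e eF; rewrite /= set_valE.
  exists q; split => //; rewrite (pi_apex q0) (pi_apex p0) //.
apply: closedU.
  apply: closed_bigI => e _.
  exact: (continuous_closedP _).1 (@coord_cont e) _ closed0R.
case: (pselect K) => HK.
  by have -> : [set p : cone_pre | K /\ (\val p).2 = 0] = [set p | (\val p).2 = 0];
    [apply/seteqP; split => p /= [] // | exact: closed_snd0].
have -> : [set p : cone_pre | K /\ (\val p).2 = 0] = set0.
  by apply/seteqP; split => p /= [].
exact: closed0.
Qed.

End Geo.

Lemma bigsetU_seqP (T : Type) (I : eqType) (s : seq I) (S : I -> set T) (c : T) :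
  (\big[setU/set0]_(F <- s) S F) c <-> exists F, F \in s /\ S F c.
Proof.
elim: s => [|F s IH]; rewrite ?big_nil ?big_cons.
  by split => // -[F []].
split.
  case => [HF|/IH [G [Gs HG]]]; first by exists F; rewrite mem_head.
  by exists G; rewrite in_cons Gs orbT.
move=> [G []]; rewrite in_cons => /orP[/eqP -> HF|Gs HG]; first by left.
by right; apply/IH; exists G.
Qed.

Section Maps.
Variables (R : realType) (E : finType) (e0 : E) (X Y : topologicalType).
Variables (x0 : X) (y0 : Y) (a : X -> Y).
Local Notation cone := (cone R E).
Local Notation apex := (apex R e0).
Local Notation M := (cone -> X -> Y).
Local Notation jk := (fun _ : X => y0).
Hypothesis ab : based_maps x0 y0 a.

Definition goodq (q : M) := based_maps_into x0 y0 [set: cone] apex a q.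

Lemma jk_based : based_maps x0 y0 jk.
Proof. by split => //; exact: cst_continuous. Qed.

Lemma goodq_cont (q : M) : goodq q -> continuous (q : cone -> {compact-open, X -> Y}).
Proof. by move=> [[_ [qc _]] _]; apply/continuous_subspace_setT. Qed.

Lemma restr_good (q : M) (S : set cone) : goodq q ->
  unbased_maps_into x0 y0 S (restr jk S q).
Proof.
move=> gq; have [[qb _] _] := gq; split; [|split].
- by move=> t St; rewrite /restr asboolT //; exact: qb.
- apply: (@subspace_eq_continuous _ _ _ (q : cone -> {compact-open, X -> Y})).
    by move=> t; rewrite inE => St; rewrite /from_subspace /restr asboolT.
  exact/continuous_subspaceT/goodq_cont.
- by move=> t St; rewrite /restr asboolF.
Qed.


Variable A : {set {set E}}.
Hypothesis lA : layout A.
Variable qs : {set E} -> M.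
Hypothesis gqs : forall F, F \in A -> goodq (qs F).

Definition wq : {set E} -> M :=
  fun F => if F \in A then restr jk (cface F) (qs F) else (fun _ => jk).

Lemma wedge_face F c : F \in A -> cface F c -> wedge_map e0 y0 a A wq c = qs F c.
Proof.
move=> FA Fc; rewrite /wedge_map; case: eqP => [->|ne].
  by have [_ ->] := gqs FA.
case: pickP => [F' /andP[F'A /asboolP F'c]|/(_ F)]; last first.
  by rewrite FA /= asboolT.
case: (eqVneq F' F) => [->|nFF].
  by rewrite /wq FA /restr asboolT.
have /eqP dis := lA.2 F' F F'A FA nFF.
by case: ne; exact: (cface_disj e0 dis F'c Fc).
Qed.

Lemma wedge_out c : ~ cwedge e0 A c -> wedge_map e0 y0 a A wq c = (fun _ => y0).
Proof.
move=> nc; rewrite /wedge_map; case: eqP => [e|ne].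
  by case: nc; left.
case: pickP => [F /andP[FA /asboolP Fc]|//].
by case: nc; right; exists F.
Qed.

Lemma wedge_based c : based_maps x0 y0 (wedge_map e0 y0 a A wq c).
Proof.
rewrite /wedge_map; case: eqP => _; first exact: ab.
case: pickP => [F /andP[FA /asboolP Fc]|_]; last exact: jk_based.
rewrite /wq FA /restr asboolT //; have [[qb _] _] := gqs FA; exact: qb.
Qed.

Lemma wedge_good : unbased_maps_into x0 y0 (cwedge e0 A) (wedge_map e0 y0 a A wq).
Proof.
split; [|split].
- by move=> t _; exact: wedge_based.
- have cwE : cwedge e0 A = [set apex] `|` \big[setU/set0]_(F <- enum A) cface F.
    apply/seteqP; split => c /=.
      case=> [->|[F FA Fc]]; first by left.
      by right; apply/bigsetU_seqP; exists F; rewrite mem_enum.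
    case=> [->|/bigsetU_seqP [F [FA Fc]]]; first by left.
    by right; exists F; rewrite // -mem_enum.
  rewrite cwE.
  have : forall F, F \in enum A -> F \in A by move=> F; rewrite mem_enum.
  elim: (enum A) => [|F s IH] sA.
    by rewrite big_nil setU0; exact: continuous_subspace1.
  rewrite big_cons setUCA setUC.
  have FA : F \in A by apply: sA; rewrite mem_head.
  apply: withinU_continuous.
  + apply: closedU; first exact: closed_apex.
    by apply: closed_bigsetU => G _; exact: closed_cface.
  + exact: closed_cface.
  + by apply: IH => G Gs; apply: sA; rewrite in_cons Gs orbT.
  + apply: (@subspace_eq_continuous _ _ _ (qs F : cone -> {compact-open, X -> Y})).
      by move=> t; rewrite inE => Ft; rewrite /from_subspace (wedge_face FA Ft).
    exact/continuous_subspaceT/goodq_cont/gqs.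
- by move=> t nt; rewrite wedge_out.
Qed.

End Maps.

Unset Implicit Arguments.
Set Strict Implicit.
Set Printing Implicit Defensive.
Local Close Scope quotient_scope.

Theorem lemma13p2 (R : realType) (X Y : topologicalType) (x0 : X) (y0 : Y)
    (a : X -> Y) (E : finType) (e0 : E)
    (Q : (cone R E -> X -> Y) -> int) :
  compact [set: X] -> hausdorff_space X ->
  based_maps x0 y0 a ->
  free_ab (based_maps_into x0 y0 [set: cone R E] (@apex R E e0) a) Q ->
  augmentation Q = 1 ->
  @almost_fissile R E e0 X Y x0 y0 a 1 Q.
Proof.
move=> cX hX ab [Qfin Qsupp] augQ A lA /=.
pose dflt : cone R E -> X -> Y := fun _ _ => y0.
pose ss : seq (cone R E -> X -> Y) := fset_set (fsupp Q).
pose n := size ss.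
pose sq (k : 'I_n) := nth dflt ss k.
pose c (k : 'I_n) := Q (sq k).
have uss : uniq ss by exact: fset_uniq.
have Qrep : Q = repK c sq.
  apply: funext => t; rewrite /repK /c /sq.
  rewrite -(big_mkord xpredT (fun k => if nth dflt ss k == t then Q (nth dflt ss k) else 0)).
  rewrite -(big_nth dflt xpredT (fun x => if x == t then Q x else 0)).
  case: (boolP (t \in ss)) => tr.
    by rewrite (bigD1_seq t) //= eqxx big1 ?addr0 // => x /negbTE ->.
  rewrite big1_seq; last by move=> x /andP[_ xr]; case: eqP => // xt; rewrite -xt xr in tr.
  apply/eqP; apply: contraNT tr => Qt; rewrite /ss in_fset_set //; exact/mem_set.
have gsq k : goodq e0 x0 y0 a (sq k).
  apply: Qsupp; have : sq k \in ss by apply: mem_nth.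
  by rewrite /ss in_fset_set // => /set_mem.
have c1 : \sum_k c k = 1 by rewrite -augQ Qrep aug_repK.
have n0 : (0 < n)%N.
  case: (posnP n) => // n0.
  have : \sum_(k : 'I_n) c k = 0.
    apply: big1 => -[k kn] _; exfalso; have := kn; by rewrite n0.
  by rewrite c1.
pose j0 : 'I_n := Ordinal n0.
have RE S : restrict_ens y0 S Q = repK c (fun k => restr (fun _ : X => y0) S (sq k)).
  by rewrite /restrict_ens Qrep lin_ext_repK.
pose cC := fun f : {ffun {set E} -> 'I_n} =>
  if f \in pfam j0 A then \prod_(F in A) c (f F) else 0.
pose gC := fun f : {ffun {set E} -> 'I_n} => wedge_map e0 y0 a A (wphi y0 sq A f).
pose dc := fun k : {ffun {set E} -> 'I_n} + 'I_n =>
  match k with inl k1 => cC k1 | inr k2 => - c k2 end.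
pose dg := fun k : {ffun {set E} -> 'I_n} + 'I_n =>
  match k with inl k1 => gC k1 | inr k2 => restr (fun _ : X => y0) (cwedge e0 A) (sq k2) end.
set D := (fun v : cone R E -> X -> Y => _ - _).
have -> : D = repK dc dg.
  rewrite /D RE.
  have -> : (fun F => restrict_ens y0 (cface F) Q) =
            (fun F => repK c (fun k => restr (fun _ : X => y0) (cface F) (sq k))).
    by apply: funext => F; rewrite RE.
  by rewrite (combine_repK e0 y0 a c sq j0 A) repK_sub.
have gdg k : unbased_maps_into x0 y0 (cwedge e0 A) (dg k).
  case: k => [f|k] /=.
    exact: (wedge_good ab lA (qs := fun F => sq (f F)) (fun F _ => gsq (f F))).
  exact: restr_good (gsq k).
split.
  split; [exact: repK_finite | move=> t /repK_supp [k <-]; exact: gdg].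
rewrite lin_ext_repK; split.
  split; [exact: repK_finite | move=> t /repK_supp [k <-]].
  exact: hashX_based (gdg k).
move=> Rs [Rsfin [Rs0 Rscard]] g; rewrite lin_ext_repK.
set z0 := wr_base x0 (apexA R e0 A).
have [p Hp] := two_pts Rsfin Rs0 Rscard.
pose u := (repr p).1; pose x := (repr p).2; pose cc := set_val u.
have ccW : cwedge e0 A cc := set_valP u.
have based k : hashX (dg k) z0 = y0 := (hashX_based (apexA R e0 A) cX hX (gdg k)).2.
pose Gf (y : Y) := fun q => if `[< Rs q >] then (if q == p then y else y0) else y0.
have key k : restr y0 Rs (hashX (dg k)) = Gf (dg k cc x).
  apply: funext => q; rewrite /restr /Gf; case: (asboolP (Rs q)) => // Rq.
  case: eqP => [->|qp]; first by [].
  by have [->|//] := Hp q Rq; exact: based k.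
pose P y := Gf y == g.
rewrite /repK (eq_bigr (fun k => if P (dg k cc x) then dc k else 0)); last first.
  by move=> k _; rewrite /= key.
rewrite big_sumType /=.
have rW k : restr (fun _ : X => y0) (cwedge e0 A) (sq k) cc = sq k cc.
  by rewrite /restr asboolT.
under [X in _ + X = _]eq_bigr => k _ do rewrite rW.
have sumC1 : \sum_f cC f = 1.
  rewrite /cC -big_mkcond /=; exact: (distr_one j0 (mem A) c1).
case: (eqVneq cc (apex R e0)) => [ccA|ccA].
  have gCa f : gC f cc = a by rewrite /gC /wedge_map ccA eqxx.
  have sqa k : sq k cc = a by rewrite ccA; exact: (gsq k).2.
  under eq_bigr => f _ do rewrite gCa.
  under [X in _ + X = _]eq_bigr => k _ do rewrite sqa.
  case: (P (a x)).
    by rewrite sumC1 sumrN c1 subrr.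
  by rewrite !big1.
case: ccW => [/eqP|[F0 F0A cF0]]; first by rewrite (negbTE ccA).
have gCF f : gC f cc = sq (f F0) cc.
  exact: (wedge_face lA (qs := fun F => sq (f F)) (fun F _ => gsq (f F)) F0A cF0).
under eq_bigr => f _ do rewrite gCF.
pose h k : int := if P (sq k cc x) then 1 else 0.
have -> : \sum_(k < n) (if P (sq k cc x) then - c k else 0) = - \sum_k c k * h k.
  rewrite -sumrN; apply: eq_bigr => k _; rewrite /h; case: (P _).
    by rewrite mulr1.
  by rewrite mulr0 oppr0.
have <- := (@distr_h _ _ j0 (mem A) F0 c h F0A c1).
rewrite [X in X - _ = _](_ : _ = \sum_(f in pfamily j0 (mem A) (fun _ _ => true))
    (\prod_(i in A) c (f i)) * h (f F0)); first by rewrite subrr.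
rewrite [RHS]big_mkcond /=; apply: eq_bigr => f _; rewrite /cC /h /pfam.
by case: (P _); case: (f \in _); rewrite ?mulr1 ?mulr0.
Qed.
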